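(* Let $p,s\in\mathbb{N}$. There does not exist a $p$-qubit UPB of size $s$ when $2^p-4<s<2^p$.
   Context: A product state in $(\mathbb{C}^2)^{\otimes p}$ is a vector $|v_1\rangle\otimes\cdots\otimes|v_p\rangle$ with each $|v_j\rangle\in\mathbb{C}^2$. A $p$-qubit unextendible product basis (UPB) is a finite set $\mathcal{S}\subseteq(\mathbb{C}^2)^{\otimes p}$ of unit product vectors that are pairwise orthogonal, such that no nonzero product vector outside $\mathcal{S}$ is orthogonal to every element of $\mathcal{S}$. The size of a UPB is its number of elements. *)

(* Defs.v *)
From HB Require Import structures.
From mathcomp Require Import all_boot all_order all_algebra.
Set Implicit Arguments. Unset Strict Implicit. Unset Printing Implicit Defensive.
Import Order.TTheory GRing.Theory Num.Theory.
Local Open Scope ring_scope.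

(* Computational basis of (C^2)^{(x) p}: bit strings b : 'I_p -> 'I_2. *)
Definition qidx (p : nat) := {ffun 'I_p -> 'I_2}.

(* Vectors of (C^2)^{(x) p}, as coordinate functions on the basis. *)
Definition qvec (C : numClosedFieldType) (p : nat) := {ffun qidx p -> C}.

Definition tensor (C : numClosedFieldType) (p : nat) (v : 'I_p -> 'I_2 -> C)
  : qvec C p := [ffun b : qidx p => \prod_(j < p) v j (b j)].

Definition is_product (C : numClosedFieldType) (p : nat) (x : qvec C p) : Prop :=
  exists v : 'I_p -> 'I_2 -> C, x = tensor v.

Definition qdot (C : numClosedFieldType) (p : nat) (x y : qvec C p) : C :=
  \sum_(b : qidx p) (x b)^* * y b.

Definition is_UPB (C : numClosedFieldType) (p : nat) (S : seq (qvec C p)) : Prop :=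
  [/\ uniq S,
      (forall x, x \in S -> is_product x /\ qdot x x = 1),
      (forall x y, x \in S -> y \in S -> x != y -> qdot x y = 0) &
      (forall z : qvec C p, is_product z -> z != 0 -> z \notin S ->
         exists2 x, x \in S & qdot x z != 0)].

(* Main.v *)
Require Import Defs.
From HB Require Import structures.
From mathcomp Require Import all_boot all_order all_algebra.
Import Order.TTheory GRing.Theory Num.Theory.
From mathcomp Require Import ring zify.
Local Open Scope ring_scope.

Section C2.
Variable C : numClosedFieldType.
Implicit Types a b c : 'I_2 -> C.

Definition ldot a b : C := \sum_(i < 2) (a i)^* * b i.
Definition det a b : C := a ord0 * b ord_max - a ord_max * b ord0.
Definition nz a := ldot a a != 0.

Lemma ldotE a b : ldot a b = (a ord0)^* * b ord0 + (a ord_max)^* * b ord_max.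
Proof.
rewrite /ldot big_ord_recr big_ord1 /=.
have -> : widen_ord (leqnSn 1) ord0 = ord0 :> 'I_2 by apply: val_inj.
by [].
Qed.

Lemma ldotC a b : ldot b a = (ldot a b)^*.
Proof. by rewrite !ldotE rmorphD /= !rmorphM /= !conjCK; ring. Qed.

Lemma ldot_eq0C a b : (ldot b a == 0) = (ldot a b == 0).
Proof. by rewrite ldotC conjC_eq0. Qed.

Lemma nzE a : nz a = (a ord0 != 0) || (a ord_max != 0).
Proof.
rewrite /nz ldotE paddr_eq0; first last.
- by rewrite mulrC mul_conjC_ge0.
- by rewrite mulrC mul_conjC_ge0.
by rewrite ![_^* * _]mulrC !mul_conjC_eq0 negb_and.
Qed.

Lemma nz_kill b x : nz b -> b ord0 * x = 0 -> b ord_max * x = 0 -> x = 0.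
Proof.
rewrite nzE => /orP [] nb e0 e1; apply/eqP.
- by move/eqP: e0; rewrite mulf_eq0 (negbTE nb).
- by move/eqP: e1; rewrite mulf_eq0 (negbTE nb).
Qed.

Lemma nz_killc b x : nz b -> (b ord0)^* * x = 0 -> (b ord_max)^* * x = 0 -> x = 0.
Proof.
rewrite nzE => /orP [] nb e0 e1; apply/eqP.
- by move/eqP: e0; rewrite mulf_eq0 conjC_eq0 (negbTE nb).
- by move/eqP: e1; rewrite mulf_eq0 conjC_eq0 (negbTE nb).
Qed.

Lemma detC a b : det b a = - det a b.
Proof. rewrite /det; ring. Qed.

Lemma det_eq0C a b : (det b a == 0) = (det a b == 0).
Proof. by rewrite detC oppr_eq0. Qed.

Lemma oo_par a b c : nz b -> ldot a b = 0 -> ldot b c = 0 -> det a c = 0.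
Proof.
move=> nb hab hbc; apply: (nz_killc _ _ nb).
- have -> : (b ord0)^* * det a c = c ord_max * (ldot a b)^* - a ord_max * ldot b c.
    by rewrite !ldotE rmorphD /= !rmorphM /= !conjCK /det; ring.
  by rewrite hab hbc rmorph0 !mulr0 subrr.
- have -> : (b ord_max)^* * det a c = - c ord0 * (ldot a b)^* + a ord0 * ldot b c.
    by rewrite !ldotE rmorphD /= !rmorphM /= !conjCK /det; ring.
  by rewrite hab hbc rmorph0 !mulr0 addr0.
Qed.

Lemma pp_par a b c : nz b -> det a b = 0 -> det b c = 0 -> det a c = 0.
Proof.
move=> nb hab hbc; apply: (nz_kill _ _ nb).
- have -> : b ord0 * det a c = a ord0 * det b c + c ord0 * det a b by rewrite /det; ring.
  by rewrite hab hbc !mulr0 addr0.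
- have -> : b ord_max * det a c = a ord_max * det b c + c ord_max * det a b by rewrite /det; ring.
  by rewrite hab hbc !mulr0 addr0.
Qed.

Lemma po_orth a b c : nz b -> det a b = 0 -> ldot b c = 0 -> ldot a c = 0.
Proof.
move=> nb hab hbc; apply: (nz_killc _ _ nb).
- have -> : (b ord0)^* * ldot a c = (a ord0)^* * ldot b c - c ord_max * (det a b)^*.
    by rewrite !ldotE /det rmorphB /= !rmorphM /=; ring.
  by rewrite hab hbc rmorph0 !mulr0 subrr.
- have -> : (b ord_max)^* * ldot a c = (a ord_max)^* * ldot b c + c ord0 * (det a b)^*.
    by rewrite !ldotE /det rmorphB /= !rmorphM /=; ring.
  by rewrite hab hbc rmorph0 !mulr0 addr0.
Qed.

Lemma par_not_orth a b : nz a -> nz b -> det a b = 0 -> ldot a b != 0.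
Proof.
move=> na nb hab; apply/eqP => hab'.
have h : ldot b b = 0.
  apply: (po_orth b a b na) hab'; apply/eqP; by rewrite det_eq0C hab.
by move: nb; rewrite /nz h eqxx.
Qed.

Definition perp b : 'I_2 -> C := fun i => if val i == 0%N then - (b ord_max)^* else (b ord0)^*.

Lemma ldot_perp a b : ldot a (perp b) = - (det a b)^*.
Proof. by rewrite ldotE /perp /= /det rmorphB /= !rmorphM /=; ring. Qed.

Lemma nz_perp b : nz b -> nz (perp b).
Proof.
rewrite !nzE /perp /= oppr_eq0 !conjC_eq0 => /orP [] ->; by rewrite ?orbT.
Qed.

End C2.
Arguments ldot {C}.
Arguments ldotE {C}.
Arguments ldotC {C}.
Arguments ldot_eq0C {C}.
Arguments nzE {C}.
Arguments nz_kill {C}.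
Arguments nz_killc {C}.
Arguments detC {C}.
Arguments det_eq0C {C}.
Arguments oo_par {C a b c}.
Arguments pp_par {C a b c}.
Arguments po_orth {C a b c}.
Arguments par_not_orth {C a b}.
Arguments ldot_perp {C}.
Arguments nz_perp {C}.

Arguments det {C}.
Arguments nz {C}.
Arguments perp {C}.

Section LA.
Variable C : numClosedFieldType.
Variable q : nat.
Definition VV := {ffun {ffun 'I_q -> 'I_2} -> C^o}.
Implicit Types x y u v : VV.

Definition hdot x y : C := \sum_b (x b)^* * y b.

Lemma dimVV : dim VV = (2 ^ q)%N.
Proof.
have -> : dim VV = (#|{ffun 'I_q -> 'I_2}| * dim (C^o))%N by [].
have -> : dim (C^o) = 1%N by [].
by rewrite muln1 card_ffun !card_ord.
Qed.

Lemma hdotC x y : hdot y x = (hdot x y)^*.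
Proof. rewrite /hdot rmorph_sum; apply: eq_bigr => b _. by rewrite rmorphM /= conjCK mulrC. Qed.

Lemma hdot_sumr x (I : finType) (c : I -> C) (Y : I -> VV) :
  hdot x (\sum_i c i *: Y i) = \sum_i c i * hdot x (Y i).
Proof.
rewrite /hdot.
under eq_bigr => b _ do rewrite sum_ffunE big_distrr.
rewrite exchange_big; apply: eq_bigr => i _; rewrite big_distrr; apply: eq_bigr => b _.
by rewrite ffunE /= -[c i *: Y i b]/(c i * Y i b) mulrCA.
Qed.

Lemma hdot_self x : hdot x x = 0 -> x = 0.
Proof.
move=> h; apply/ffunP => b; rewrite ffunE; apply/eqP.
have := h; rewrite /hdot => /eqP; rewrite psumr_eq0 => [/allP H|]; last first.
  by move=> i _; rewrite mulrC mul_conjC_ge0.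
by have := H b (mem_index_enum _); rewrite mulrC mul_conjC_eq0.
Qed.

Lemma hdot_span x (X : seq VV) u : (forall y, y \in X -> hdot x y = 0) ->
  u \in <<X>>%VS -> hdot x u = 0.
Proof.
move=> H uX; rewrite (coord_span (X := in_tuple X) uX) hdot_sumr big1 // => i _.
by rewrite H ?mulr0 // mem_nth.
Qed.

Arguments hdot_span {x X u}.

Lemma hdot_span2 (X Y : seq VV) u v :
  (forall x y, x \in X -> y \in Y -> hdot x y = 0) ->
  u \in <<X>>%VS -> v \in <<Y>>%VS -> hdot u v = 0.
Proof.
move=> H uX vY; apply: (hdot_span _ vY) => y yY.
rewrite hdotC; apply/eqP; rewrite conjC_eq0; apply/eqP.
apply: (hdot_span _ uX) => x xX; by rewrite hdotC H // rmorph0.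
Qed.

Variable T : finType.
Variable f : T -> VV.
Implicit Types L : {set T}.

Definition spn (L : {set T}) := <<[seq f i | i <- enum L]>>%VS.
Definition rk L := \dim (spn L).

Lemma spn_mem {L i} : i \in L -> f i \in spn L.
Proof. by move=> iL; apply: memv_span; apply: map_f; rewrite mem_enum. Qed.

Lemma spn_sub L (U : {vspace VV}) : (forall i, i \in L -> f i \in U) -> (spn L <= U)%VS.
Proof. by move=> H; apply/span_subvP => y /mapP [i]; rewrite mem_enum => /H iU ->. Qed.

Lemma spn_mono L1 L2 : L1 \subset L2 -> (spn L1 <= spn L2)%VS.
Proof. by move=> /subsetP s; apply: spn_sub => i /s; apply: spn_mem. Qed.

Lemma rk_mono L1 L2 : L1 \subset L2 -> (rk L1 <= rk L2)%N.
Proof. by move/spn_mono/dimvS. Qed.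

Lemma rk_bound L : (rk L <= 2 ^ q)%N.
Proof. by rewrite -dimVV -dimvf; apply: dimvS; apply: subvf. Qed.

Lemma spnU L1 L2 : spn (L1 :|: L2) = (spn L1 + spn L2)%VS.
Proof.
apply/eqP; rewrite eqEsubv; apply/andP; split.
  apply: spn_sub => i; rewrite inE => /orP [] iL.
  - exact: (subvP (addvSl _ _) _ (spn_mem iL)).
  - exact: (subvP (addvSr _ _) _ (spn_mem iL)).
by rewrite subv_add !spn_mono // ?subsetUl ?subsetUr.
Qed.

Definition orthsets (L1 L2 : {set T}) :=
  forall i j, i \in L1 -> j \in L2 -> hdot (f i) (f j) = 0.

Lemma rk_add L1 L2 : orthsets L1 L2 -> rk (L1 :|: L2) = (rk L1 + rk L2)%N.
Proof.
move=> H; rewrite /rk spnU dimv_disjoint_sum //.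
apply/eqP; rewrite -subv0; apply/subvP => v; rewrite memv_cap memv0 => /andP [v1 v2].
apply/eqP; apply: hdot_self; apply: (hdot_span2 _ _ _ _ _ v1 v2).
by move=> _ _ /mapP [i + ->] /mapP [j + ->]; rewrite !mem_enum; apply: H.
Qed.

Definition orthset (L : {set T}) :=
  forall i j, i \in L -> j \in L -> i != j -> hdot (f i) (f j) = 0.

Lemma rk1 (x : T) : hdot (f x) (f x) != 0 -> rk [set x] = 1%N.
Proof.
move=> nx; rewrite /rk /spn enum_set1 /= span_seq1 dim_vline.
suff -> : f x != 0 by [].
by apply: contra nx => /eqP ->; rewrite /hdot big1 // => b _; rewrite ffunE mulr0.
Qed.

Lemma rk0 : rk set0 = 0%N.
Proof. by rewrite /rk /spn enum_set0 /= span_nil dimv0. Qed.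

Lemma rk_free L : orthset L -> (forall i, i \in L -> hdot (f i) (f i) != 0) ->
  rk L = #|L|.
Proof.
elim: {L}_.+1 {-2}L (ltnSn #|L|) => // n IH L lt Ho Hn.
case: (set_0Vmem L) => [->|[x xL]]; first by rewrite rk0 cards0.
have E : L = [set x] :|: (L :\ x) by rewrite setD1K.
rewrite {1}E rk_add ?rk1 ?Hn //.
  rewrite IH.
  - by rewrite [in RHS](cardsD1 x L) xL.
  - by move: lt; rewrite (cardsD1 x L) xL.
  - by move=> i j /setD1P [_ iL] /setD1P [_ jL]; apply: Ho.
  - by move=> i /setD1P [_ iL]; apply: Hn.
- move=> i j; rewrite inE => /eqP -> /setD1P [jx jL]; apply: Ho => //.
  by rewrite eq_sym.
Qed.

Lemma rk_orth_ext L1 L2 w : L1 \subset L2 -> rk L1 = rk L2 ->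
  (forall i, i \in L1 -> hdot (f i) w = 0) -> forall i, i \in L2 -> hdot (f i) w = 0.
Proof.
move=> s e H i iL2.
have E : spn L1 = spn L2.
  by apply/eqP; rewrite eqEdim spn_mono //= -/(rk L2) -/(rk L1) e.
have : f i \in spn L1 by rewrite E spn_mem.
move=> fi; rewrite hdotC; apply/eqP; rewrite conjC_eq0; apply/eqP.
apply: (hdot_span _ fi) => _ /mapP [j + ->]; rewrite mem_enum => jL.
by rewrite hdotC H // rmorph0.
Qed.

End LA.
Arguments hdot {C q}.
Arguments dimVV {C q}.
Arguments hdotC {C q}.
Arguments hdot_sumr {C q}.
Arguments hdot_self {C q}.
Arguments hdot_span2 {C q}.
Arguments spn_mem {C q}.
Arguments spn_sub {C q}.
Arguments spn_mono {C q}.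
Arguments rk_mono {C q}.
Arguments rk_bound {C q}.
Arguments spnU {C q}.
Arguments rk_add {C q}.
Arguments rk1 {C q}.
Arguments rk0 {C q}.
Arguments rk_free {C q}.
Arguments rk_orth_ext {C q}.

Arguments spn {C q T}.
Arguments rk {C q T}.
Arguments orthset {C q T}.
Arguments orthsets {C q T}.

Section Tens.
Variable C : numClosedFieldType.

Lemma sum_prod_conj (q : nat) (v w : 'I_q -> 'I_2 -> C) :
  \sum_(b : {ffun 'I_q -> 'I_2}) (\prod_j v j (b j))^* * (\prod_j w j (b j))
  = \prod_j ldot (v j) (w j).
Proof.
rewrite /ldot bigA_distr_bigA /=; apply: eq_bigr => b _.
by rewrite rmorph_prod -big_split.
Qed.

Definition tens {q : nat} (v : 'I_q -> 'I_2 -> C) : VV C q :=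
  [ffun b : {ffun 'I_q -> 'I_2} => \prod_j v j (b j)].

Lemma hdot_tens q (v w : 'I_q -> 'I_2 -> C) :
  hdot (tens v) (tens w) = \prod_j ldot (v j) (w j).
Proof.
rewrite -sum_prod_conj /hdot; apply: eq_bigr => b _; by rewrite !ffunE.
Qed.

Lemma prod_eq0P (q : nat) (F : 'I_q -> C) :
  \prod_j F j = 0 -> exists j, F j = 0.
Proof.
move/eqP; rewrite prodf_seq_eq0 => /hasP [j _ /eqP h]; by exists j.
Qed.

Lemma prod_neq0 (q : nat) (F : 'I_q -> C) :
  (forall j, F j != 0) -> \prod_j F j != 0.
Proof. move=> H; rewrite prodf_seq_neq0; apply/allP => j _; exact: H. Qed.

End Tens.
Arguments tens {C q}.
Arguments sum_prod_conj {C}.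
Arguments hdot_tens {C}.
Arguments prod_eq0P {C}.
Arguments prod_neq0 {C}.


Section Rel.
Variable C : numClosedFieldType.
Implicit Types a b c : 'I_2 -> C.
Definition rel a b := (det a b == 0) || (ldot a b == 0).

Lemma rel_sym {a b} : rel a b = rel b a.
Proof. by rewrite /rel det_eq0C ldot_eq0C. Qed.

Lemma rel_trans {a b c} : nz b -> rel a b -> rel b c -> rel a c.
Proof.
move=> nb /orP [] /eqP hab /orP [] /eqP hbc; apply/orP.
- by left; apply/eqP; apply: pp_par nb hab hbc.
- by right; apply/eqP; apply: po_orth nb hab hbc.
- right; apply/eqP; rewrite ldotC; apply/eqP; rewrite conjC_eq0; apply/eqP.
  apply: (@po_orth _ c b a nb); last by rewrite ldotC hab rmorph0.
  by apply/eqP; rewrite det_eq0C hbc.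
- by left; apply/eqP; apply: oo_par nb hab hbc.
Qed.
End Rel.
Arguments rel {C}.

Section Step.
Variable C : numClosedFieldType.
Variable q : nat.
Variable T : finType.
Variable A : {set T}.
Variable V : T -> 'I_q.+1 -> 'I_2 -> C.
Hypothesis nzV : forall i j, i \in A -> nz (V i j).
Hypothesis orthV : forall i k, i \in A -> k \in A -> i != k ->
  exists j, ldot (V i j) (V k j) = 0.

Definition V0 i := V i ord0.
Definition V' i : 'I_q -> 'I_2 -> C := fun j => V i (lift ord0 j).
Definition ff i : VV C q := tens (V' i).

Definition Kc x := [set i in A | rel (V0 x) (V0 i)].
Definition Pc x := [set i in A | det (V0 x) (V0 i) == 0].
Definition Nc x := [set i in A | ldot (V0 x) (V0 i) == 0].

Lemma nz0 {i} : i \in A -> nz (V0 i).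
Proof. exact: nzV. Qed.

Lemma ff_nz {i} : i \in A -> hdot (ff i) (ff i) != 0.
Proof. by move=> iA; rewrite hdot_tens prod_neq0 // => j; apply: nzV. Qed.

Lemma horth {i k} : i \in A -> k \in A -> i != k -> ldot (V0 i) (V0 k) != 0 ->
  hdot (ff i) (ff k) = 0.
Proof.
move=> iA kA ik h; have [j hj] := orthV _ _ iA kA ik.
case: (unliftP ord0 j) hj => [j'|] -> hj; last by move: h; rewrite /V0 hj eqxx.
rewrite hdot_tens; apply/eqP; rewrite prodf_seq_eq0; apply/hasP; exists j' => //.
by apply/eqP; exact: hj.
Qed.

Lemma PcA x : Pc x \subset A. Proof. by apply/subsetP => i; rewrite inE => /andP []. Qed.
Lemma NcA x : Nc x \subset A. Proof. by apply/subsetP => i; rewrite inE => /andP []. Qed.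
Lemma KcA x : Kc x \subset A. Proof. by apply/subsetP => i; rewrite inE => /andP []. Qed.

Lemma KcE x : Kc x = Pc x :|: Nc x.
Proof. by apply/setP => i; rewrite !inE andb_orr. Qed.

Lemma PcN {x} : x \in A -> [disjoint Pc x & Nc x].
Proof.
move=> xA; rewrite -setI_eq0; apply/eqP/setP => i; rewrite !inE.
apply/negP => /andP [/andP [iA hp] /andP [_ ho]].
by move: (par_not_orth (nz0 xA) (nz0 iA) (eqP hp)); rewrite ho.
Qed.

Lemma cardK {x} : x \in A -> #|Kc x| = (#|Pc x| + #|Nc x|)%N.
Proof. by move=> xA; rewrite KcE cardsU (disjoint_setI0 (PcN xA)) cards0 subn0. Qed.

Lemma orthP {x} : x \in A -> orthset ff (Pc x).
Proof.
move=> xA i k; rewrite !inE => /andP [iA hi] /andP [kA hk] ik.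
apply: horth => //; apply: par_not_orth; try exact: nz0.
apply: (pp_par (nz0 xA)) (eqP hk).
by apply/eqP; rewrite det_eq0C.
Qed.

Lemma orthN {x} : x \in A -> orthset ff (Nc x).
Proof.
move=> xA i k; rewrite !inE => /andP [iA hi] /andP [kA hk] ik.
apply: horth => //; apply: par_not_orth; try exact: nz0.
apply: (oo_par (nz0 xA)) (eqP hk).
by apply/eqP; rewrite ldot_eq0C.
Qed.

Lemma Kc_self {x} : x \in A -> x \in Kc x.
Proof.
move=> xA; rewrite inE xA /= /rel; apply/orP; left.
by rewrite /det mulrC subrr.
Qed.

Lemma Kc_same {x y} : x \in A -> y \in Kc x -> Kc y = Kc x.
Proof.
move=> xA; rewrite inE => /andP [yA hxy]; apply/setP => i; rewrite !inE.
case iA: (i \in A) => //=; apply/idP/idP => h.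
- exact: rel_trans (nz0 yA) hxy h.
- by apply: rel_trans (nz0 xA) _ h; rewrite rel_sym.
Qed.

Lemma Kc_disj {x y} : x \in A -> y \in A -> y \notin Kc x -> [disjoint Kc x & Kc y].
Proof.
move=> xA yA ny; rewrite -setI_eq0; apply/eqP/setP => i; rewrite !inE.
apply/negP => /andP [/andP [iA h1] /andP [_ h2]].
move: ny; rewrite inE yA /=; apply/negP/negPn.
by apply: rel_trans (nz0 iA) h1 _; rewrite rel_sym.
Qed.

Lemma cross {x i k} : x \in A -> i \in Kc x -> k \in A -> k \notin Kc x ->
  hdot (ff i) (ff k) = 0.
Proof.
move=> xA iK kA kK; have iA : i \in A by move: iK; rewrite inE => /andP [].
apply: horth => //.
  by apply: contraNneq kK => <-.
apply/negP => /eqP h; move: kK; rewrite inE kA /=; apply/negP/negPn.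
move: iK; rewrite inE => /andP [_ hxi].
by apply: rel_trans (nz0 iA) hxi _; rewrite /rel h eqxx orbT.
Qed.

Lemma cross_sets {x} {L1 L2 : {set T}} : x \in A -> L1 \subset Kc x ->
  L2 \subset A -> [disjoint L2 & Kc x] -> orthsets ff L1 L2.
Proof.
move=> xA s1 s2 d i k iL kL; apply: (cross xA).
- exact: (subsetP s1).
- exact: (subsetP s2).
- by move: d; rewrite disjoint_sym => /disjointFl -> //; exact: (subsetP s1).
Qed.


Lemma orthsetsC {L1 L2 : {set T}} : orthsets ff L1 L2 -> orthsets ff L2 L1.
Proof. by move=> H i j iL jL; rewrite hdotC H // rmorph0. Qed.

Lemma orthsetU {L1 L2 : {set T}} : orthset ff L1 -> orthset ff L2 -> orthsets ff L1 L2 ->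
  orthset ff (L1 :|: L2).
Proof.
move=> H1 H2 H12 i j; rewrite !inE => /orP [] iL /orP [] jL ij.
- exact: H1.
- exact: H12.
- exact: (orthsetsC H12).
- exact: H2.
Qed.

Definition cc (L : {set T}) := L \subset A /\ forall x, x \in L -> Kc x \subset L.

Lemma cc_A : cc A.
Proof. by split => // x _; apply: KcA. Qed.

Lemma cc_sub {L} : cc L -> L \subset A. Proof. by case. Qed.

Lemma setD_split {L K : {set T}} : K \subset L -> L = K :|: (L :\: K).
Proof.
move/subsetP => s; apply/setP => i; rewrite !inE.
by case iK: (i \in K) => //=; rewrite s.
Qed.

Lemma cc_rem {L x} : cc L -> x \in L -> cc (L :\: Kc x).
Proof.
move=> [sL cL] xL; have xA : x \in A by exact: (subsetP sL).
split.
  by apply: subset_trans sL; apply: subsetDl.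
move=> y; rewrite in_setD => /andP [yK yL]; apply/subsetP => i iKy.
have yA : y \in A by exact: (subsetP sL).
rewrite in_setD (subsetP (cL _ yL)) // andbT.
have := Kc_disj xA yA yK; rewrite -setI_eq0 => /eqP /setP /(_ i).
by rewrite in_setI iKy andbT in_set0 => ->.
Qed.

Lemma card_split {L x} : cc L -> x \in L -> #|L| = (#|Kc x| + #|L :\: Kc x|)%N.
Proof.
move=> [sL cL] xL; rewrite -(cardsID (Kc x) L).
by move/setIidPr: (cL x xL) => ->.
Qed.

Lemma rk_split {L x} : cc L -> x \in L -> rk ff L = (rk ff (Kc x) + rk ff (L :\: Kc x))%N.
Proof.
move=> [sL cL] xL; have xA : x \in A by exact: (subsetP sL).
rewrite {1}(setD_split (cL x xL)) rk_add //.
apply: (cross_sets xA) => //.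
  by apply: subset_trans sL; apply: subsetDl.
by rewrite -setI_eq0; apply/eqP/setP => i; rewrite in_setI in_setD in_set0; case: (i \in Kc x); rewrite ?andbF.
Qed.

Lemma cc_ind (P : {set T} -> Prop) : P set0 ->
  (forall L x, cc L -> x \in L -> P (L :\: Kc x) -> P L) -> forall L, cc L -> P L.
Proof.
move=> P0 PS L; elim: {L}_.+1 {-2}L (ltnSn #|L|) => // n IH L lt cL.
case: (set_0Vmem L) => [->|[x xL]] //.
apply: (PS L x cL xL); apply: IH; last exact: cc_rem.
have xK : x \in Kc x by apply: Kc_self; exact: (subsetP (cc_sub cL)).
have : (0 < #|Kc x|)%N by apply/card_gt0P; exists x.
move: lt; rewrite (card_split cL xL); lia.
Qed.



Lemma rkP {x} : x \in A -> rk ff (Pc x) = #|Pc x|.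
Proof.
move=> xA; apply: rk_free; first exact: orthP.
by move=> i /(subsetP (PcA x)) iA; apply: ff_nz.
Qed.

Lemma rkN {x} : x \in A -> rk ff (Nc x) = #|Nc x|.
Proof.
move=> xA; apply: rk_free; first exact: orthN.
by move=> i /(subsetP (NcA x)) iA; apply: ff_nz.
Qed.

Lemma P_le {x} : x \in A -> (#|Pc x| <= rk ff (Kc x))%N.
Proof. by move=> xA; rewrite -(rkP xA); apply: rk_mono; rewrite KcE subsetUl. Qed.

Lemma N_le {x} : x \in A -> (#|Nc x| <= rk ff (Kc x))%N.
Proof. by move=> xA; rewrite -(rkN xA); apply: rk_mono; rewrite KcE subsetUr. Qed.

Lemma K_le {x} : x \in A -> (#|Kc x| <= 2 * rk ff (Kc x))%N.
Proof. move=> xA; rewrite (cardK xA); have := P_le xA; have := N_le xA; lia. Qed.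

Lemma twice L : cc L -> (#|L| <= 2 * rk ff L)%N.
Proof.
move: L; apply: (cc_ind (fun L => #|L| <= 2 * rk ff L)%N); first by rewrite cards0.
move=> {}L x cL xL IH; rewrite (card_split cL xL) (rk_split cL xL).
have := K_le (subsetP (cc_sub cL) _ xL); lia.
Qed.

Lemma tight_all L : cc L -> (forall x, x \in L -> #|Kc x| = 2 * rk ff (Kc x))%N ->
  #|L| = (2 * rk ff L)%N.
Proof.
move: L; apply: (cc_ind (fun L => (forall x, x \in L -> #|Kc x| = 2 * rk ff (Kc x))%N ->
  #|L| = (2 * rk ff L)%N)); first by rewrite cards0 rk0.
move=> L x cL xL IH H; rewrite (card_split cL xL) (rk_split cL xL) H // IH; first lia.
by move=> y; rewrite in_setD => /andP [_ yL]; apply: H.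
Qed.

Definition good x := (rk ff (Pc x) == rk ff (Kc x)) || (rk ff (Nc x) == rk ff (Kc x)).

Lemma good_peel L : cc L -> (forall x, x \in L -> good x) ->
  exists Y : {set T}, [/\ Y \subset L, orthset ff Y & #|Y| = rk ff L].
Proof.
move: L; apply: (cc_ind (fun L => (forall x, x \in L -> good x) ->
  exists Y : {set T}, [/\ Y \subset L, orthset ff Y & #|Y| = rk ff L])).
  by move=> _; exists set0; split; rewrite ?sub0set ?cards0 ?rk0 // => i j; rewrite in_set0.
move=> L x cL xL IH H.
have xA : x \in A by exact: (subsetP (cc_sub cL)).
have [|Y [sY oY cY]] := IH.
  by move=> y; rewrite in_setD => /andP [_ yL]; apply: H.
have sR : L :\: Kc x \subset A by apply: subset_trans (cc_sub cL); apply: subsetDl.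
have dR : [disjoint Y & Kc x].
  rewrite -setI_eq0; apply/eqP/setP => i; rewrite in_setI in_set0.
  by case iY: (i \in Y) => //=; move: (subsetP sY _ iY); rewrite in_setD => /andP [/negbTE].
have sYA : Y \subset A by apply: subset_trans sR.
have [X [sX oX cX]] : exists X : {set T}, [/\ X \subset Kc x, orthset ff X & #|X| = rk ff (Kc x)].
  case/orP: (H x xL) => /eqP e.
  - by exists (Pc x); split; [rewrite KcE subsetUl | apply: orthP | rewrite -(rkP xA)].
  - by exists (Nc x); split; [rewrite KcE subsetUr | apply: orthN | rewrite -(rkN xA)].
have oXY : orthsets ff X Y by apply: (cross_sets xA).
exists (X :|: Y); split.
- rewrite subUset; apply/andP; split.
    by apply: (subset_trans sX); case: cL => _; apply.
  by apply: (subset_trans sY); apply: subsetDl.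
- exact: orthsetU.
- rewrite cardsU (rk_split cL xL) -cX -cY.
  have -> : X :&: Y = set0.
    apply/setP => i; rewrite in_setI in_set0; apply/negP => /andP [iX iY].
    move: dR; rewrite -setI_eq0 => /eqP/setP/(_ i); rewrite in_setI in_set0 iY (subsetP sX _ iX).
    by [].
  by rewrite cards0 subn0.
Qed.



Lemma rkA_le : (rk ff A <= 2 ^ q)%N.
Proof. exact: rk_bound. Qed.

Lemma bad_bnd {x} : x \in A -> ~~ good x ->
  (#|Pc x| < rk ff (Kc x))%N /\ (#|Nc x| < rk ff (Kc x))%N.
Proof.
move=> xA; rewrite /good negb_or => /andP [h1 h2].
by rewrite !ltn_neqAle -(rkP xA) -(rkN xA) h1 h2 (rkP xA) (rkN xA) (P_le xA) (N_le xA).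
Qed.

Lemma choice_x0 : A != set0 -> (2 ^ q.+1 < #|A| + 4)%N -> (#|A| < 2 ^ q.+1)%N ->
  exists x0, exists X : {set T}, [/\ x0 \in A, (X = Pc x0 \/ X = Nc x0),
    (forall y, y \in A :\: Kc x0 -> good y),
    (2 ^ q <= #|X| + rk ff (A :\: Kc x0) + 3)%N &
    (#|X| + rk ff (A :\: Kc x0) < 2 ^ q)%N].
Proof.
move=> A0; rewrite expnS => h1 h2.
have rA := rkA_le.
case: (boolP [exists x0 in A, ~~ good x0]).
  case/exists_inP => x0 x0A bx0.
  have [bP bN] := bad_bnd x0A bx0.
  have cR := cc_rem cc_A x0A.
  have sA := card_split cc_A x0A; have rS := rk_split cc_A x0A.
  have tR := twice _ cR.
  exists x0, (Pc x0); split => //; first by left.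
  - move=> y yR; apply/negPn/negP => by0.
    have yA : y \in A by move: yR; rewrite in_setD => /andP [].
    have [bP' bN'] := bad_bnd yA by0.
    have sR := card_split cR yR; have rR := rk_split cR yR.
    have tR' := twice _ (cc_rem cR yR).
    have := cardK x0A; have := cardK yA; lia.
  - have := cardK x0A; lia.
  - lia.
move=> allg.
have {}allg : forall x, x \in A -> good x.
  by move=> x xA; apply/negPn/negP => bx; move/negP: allg; apply; apply/exists_inP; exists x.
case/set0Pn: A0 => x0 x0A.
have cR := cc_rem cc_A x0A.
have sA := card_split cc_A x0A; have rS := rk_split cc_A x0A.
have tA := twice _ cc_A.
case: (ltnP (rk ff A) (2 ^ q)) => hr.
  have [X [XE cX]] : exists X, (X = Pc x0 \/ X = Nc x0) /\ #|X| = rk ff (Kc x0).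
    case/orP: (allg x0 x0A) => /eqP e.
    - by exists (Pc x0); split; [left | rewrite -(rkP x0A)].
    - by exists (Nc x0); split; [right | rewrite -(rkN x0A)].
  exists x0, X; split => //.
  - by move=> y; rewrite in_setD => /andP [_ yA]; apply: allg.
  - lia.
  - lia.
have hr' : rk ff A = (2 ^ q)%N by apply/eqP; rewrite eqn_leq rA hr.
have [x1 x1A nt] : exists2 x1, x1 \in A & #|Kc x1| != (2 * rk ff (Kc x1))%N.
  apply/exists_inP; apply: contraT => hn.
  have := tight_all _ cc_A; rewrite hr' => H.
  suff : #|A| = (2 * 2 ^ q)%N by lia.
  apply: H => x xA; apply/eqP; apply/negPn/negP => hx; move/negP: hn; apply.
  by apply/exists_inP; exists x.
have cR1 := cc_rem cc_A x1A.
have sA1 := card_split cc_A x1A; have rS1 := rk_split cc_A x1A.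
have tR1 := twice _ cR1.
have cK1 := cardK x1A; have pl := P_le x1A; have nl := N_le x1A.
have lt1 : (#|Kc x1| < 2 * rk ff (Kc x1))%N by rewrite ltn_neqAle nt K_le.
have [X [XE cX1 cX2]] : exists X, [/\ (X = Pc x1 \/ X = Nc x1),
    (#|X| < rk ff (Kc x1))%N & (#|Kc x1| <= #|X| + rk ff (Kc x1))%N].
  case: (ltnP #|Pc x1| (rk ff (Kc x1))) => hp.
  - by exists (Pc x1); split; [left | | lia].
  - by exists (Nc x1); split; [right | lia | lia].
exists x1, X; split => //.
- by move=> y; rewrite in_setD => /andP [_ yA]; apply: allg.
- lia.
- lia.
Qed.



Definition e0 : 'I_2 -> C := fun i => if val i == 0%N then 1 else 0.
Lemma nz_e0 : nz e0.
Proof. by rewrite nzE /e0 /= oner_eq0. Qed.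

Definition IHtype := forall (T' : finType) (A' : {set T'}) (V2 : T' -> 'I_q -> 'I_2 -> C),
  (forall i j, i \in A' -> nz (V2 i j)) ->
  (forall i k, i \in A' -> k \in A' -> i != k -> exists j, ldot (V2 i j) (V2 k j) = 0) ->
  (2 ^ q < #|A'| + 4)%N -> (#|A'| < 2 ^ q)%N ->
  exists w : 'I_q -> 'I_2 -> C, (forall j, nz (w j)) /\
     forall i, i \in A' -> exists j, ldot (V2 i j) (w j) = 0.

Lemma w_lift (w' : 'I_q -> 'I_2 -> C) c j :
  (fun j => if unlift ord0 j is Some j' then w' j' else c) (lift ord0 j) = w' j.
Proof. by rewrite /= liftK. Qed.

Lemma step (IH : IHtype) : (2 ^ q.+1 < #|A| + 4)%N -> (#|A| < 2 ^ q.+1)%N ->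
  exists w : 'I_q.+1 -> 'I_2 -> C, (forall j, nz (w j)) /\
     forall i, i \in A -> exists j, ldot (V i j) (w j) = 0.
Proof.
move=> h1 h2.
case: (eqVneq A set0) => [A0|A0].
  by exists (fun _ => e0); split => [j|i]; [exact: nz_e0 | rewrite A0 in_set0].
have [x0 [X [x0A XE goodR lo hi]]] := choice_x0 A0 h1 h2.
have cR := cc_rem cc_A x0A.
have [Y [sY oY cY]] := good_peel _ cR goodR.
have sR : A :\: Kc x0 \subset A by apply: subsetDl.
have sYA : Y \subset A by apply: (subset_trans sY).
have dY : [disjoint Y & Kc x0].
  rewrite -setI_eq0; apply/eqP/setP => i; rewrite in_setI in_set0.
  by case iY: (i \in Y) => //=; move: (subsetP sY _ iY); rewrite in_setD => /andP [/negbTE].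
have [sX oX] : X \subset Kc x0 /\ orthset ff X.
  case: XE => ->; split; rewrite ?KcE ?subsetUl ?subsetUr //.
  - exact: orthP.
  - exact: orthN.
have sXA : X \subset A by apply: (subset_trans sX); apply: KcA.
have oXY : orthsets ff X Y by apply: (cross_sets x0A).
have oZ : orthset ff (X :|: Y) by apply: orthsetU.
have cZ : #|X :|: Y| = (#|X| + #|Y|)%N.
  rewrite cardsU.
  have -> : X :&: Y = set0.
    apply/setP => i; rewrite in_setI in_set0; apply/negP => /andP [iX iY].
    move: dY; rewrite -setI_eq0 => /eqP/setP/(_ i); rewrite in_setI in_set0 iY (subsetP sX _ iX).
    by [].
  by rewrite cards0 subn0.
have sZA : X :|: Y \subset A by rewrite subUset sXA sYA.
have [w' [nzw' cov']] : exists w : 'I_q -> 'I_2 -> C, (forall j, nz (w j)) /\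
     forall i, i \in X :|: Y -> exists j, ldot (V' i j) (w j) = 0.
  apply: IH.
  - by move=> i j iZ; apply: nzV; exact: (subsetP sZA).
  - move=> i k iZ kZ ik; have := oZ _ _ iZ kZ ik.
    by rewrite /ff hdot_tens => /prod_eq0P.
  - lia.
  - lia.
have orthZ : forall i, i \in X :|: Y -> hdot (ff i) (tens w') = 0.
  move=> i iZ; have [j hj] := cov' i iZ.
  rewrite /ff hdot_tens; apply/eqP; rewrite prodf_seq_eq0; apply/hasP; exists j => //.
  by apply/eqP; exact: hj.
have orthR : forall i, i \in A :\: Kc x0 -> hdot (ff i) (tens w') = 0.
  apply: (@rk_orth_ext _ _ _ ff Y (A :\: Kc x0) (tens w') sY).
  - rewrite rk_free // ?cY // => i iY; apply: ff_nz; exact: (subsetP sYA).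
  - by move=> i iY; apply: orthZ; rewrite inE iY orbT.
have [c [nzc hc]] : exists c, nz c /\ forall i, i \in Kc x0 -> i \notin X -> ldot (V0 i) c = 0.
  have nx := nz0 x0A.
  case: XE => ->.
  - exists (V0 x0); split => // i; rewrite KcE in_setU => /orP [iP|iN] iX; first by rewrite iP in iX.
    move: iN; rewrite inE => /andP [_ h]; apply/eqP; by rewrite ldot_eq0C.
  - exists (perp (V0 x0)); split; first exact: nz_perp.
    move=> i; rewrite KcE in_setU => /orP [iP|iN] iX; last by rewrite iN in iX.
    move: iP; rewrite inE => /andP [_ h].
    by rewrite ldot_perp; move: h; rewrite -det_eq0C => /eqP ->; rewrite rmorph0 oppr0.
pose w := fun j => if unlift ord0 j is Some j' then w' j' else c.
exists w; split.
  by move=> j; rewrite /w; case: (unlift ord0 j) => [j'|].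
move=> i iA.
case: (boolP (i \in Kc x0)) => iK.
  case: (boolP (i \in X)) => iX.
    have [j hj] : exists j, ldot (V' i j) (w' j) = 0 by apply: cov'; rewrite inE iX.
    by exists (lift ord0 j); rewrite /w liftK; exact: hj.
  by exists ord0; rewrite /w unlift_none; apply: hc.
have iR : i \in A :\: Kc x0 by rewrite in_setD iK.
have := orthR i iR; rewrite /ff hdot_tens => /prod_eq0P [j hj].
by exists (lift ord0 j); rewrite /w liftK; exact: hj.
Qed.

End Step.

Lemma mainP (C : numClosedFieldType) (q : nat) : IHtype C q.
Proof.
elim: q => [|q IH] T A V nzV orthV h1 h2.
  exists (fun _ => e0 C); split => [[]//|i iA].
  by move: h2; rewrite expn0 ltnS leqn0 => /eqP /cards0_eq A0; rewrite A0 in_set0 in iA.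
exact: (@step C q T A V nzV orthV IH h1 h2).
Qed.

Lemma qdot_tensor (C : numClosedFieldType) (p : nat) (v w : 'I_p -> 'I_2 -> C) :
  qdot (tensor v) (tensor w) = \prod_j ldot (v j) (w j).
Proof. rewrite /qdot -sum_prod_conj; apply: eq_bigr => b _; by rewrite !ffunE. Qed.

Local Close Scope ring_scope.

Theorem proposition2 (C : numClosedFieldType) (p s : nat) :
  (2 ^ p < s + 4)%N -> (s < 2 ^ p)%N ->
  ~ exists S : seq (qvec C p), size S = s /\ is_UPB S.
Proof.
move=> h1 h2 [S [hs [uS prodS orthS unext]]].
have : forall i : 'I_(size S), exists v : 'I_p -> 'I_2 -> C, nth 0%R S i = tensor v.
  move=> i; have [v ->] := proj1 (prodS _ (mem_nth 0%R (ltn_ord i))).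
  by exists v.
case/fin_all_exists => V HV.
have nzV : forall (i : 'I_(size S)) j, i \in [set: 'I_(size S)] -> nz (V i j).
  move=> i j _; have := proj2 (prodS _ (mem_nth 0%R (ltn_ord i))).
  rewrite HV qdot_tensor => h; apply/negP => /eqP hz.
  have : (\prod_j0 ldot (V i j0) (V i j0) == 0)%R.
    by rewrite prodf_seq_eq0; apply/hasP; exists j => //; apply/eqP.
  by rewrite h oner_eq0.
have orthV : forall (i k : 'I_(size S)), i \in [set: 'I_(size S)] -> k \in [set: 'I_(size S)] -> i != k ->
    exists j, ldot (V i j) (V k j) = 0%R.
  move=> i k _ _ ik; apply: prod_eq0P; rewrite -qdot_tensor -!HV.
  apply: orthS; rewrite ?mem_nth //.
  by rewrite nth_uniq // => /eqP e; move: ik; rewrite (inj_eq val_inj) /= e eqxx.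
have cA : #|[set: 'I_(size S)]| = s by rewrite cardsT card_ord.
have := @mainP C p _ [set: _] V nzV orthV; rewrite cA => /(_ h1 h2) [w [nzw cov]].
have zS : forall i : 'I_(size S), qdot (nth 0%R S i) (tensor w) = 0%R.
  move=> i; rewrite HV qdot_tensor; apply/eqP; rewrite prodf_seq_eq0; apply/hasP.
  have [j hj] := cov i (in_setT i); exists j => //; by apply/eqP.
have nzz : qdot (tensor w) (tensor w) != 0%R.
  by rewrite qdot_tensor prod_neq0.
have z0 : tensor w != 0%R.
  by apply: contra nzz => /eqP ->; rewrite /qdot big1 // => b _; rewrite ffunE mulr0.
have zin : tensor w \notin S.
  apply/negP => zS'.
  have ix : (index (tensor w) S < size S)%N by rewrite index_mem.
  have := zS (Ordinal ix); rewrite /= nth_index // => h0.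
  by rewrite h0 eqxx in nzz.
have [x xS] := unext (tensor w) (ex_intro _ w erefl) z0 zin.
have ix : (index x S < size S)%N by rewrite index_mem.
have := zS (Ordinal ix); rewrite /= nth_index // => ->.
by rewrite eqxx.
Qed.
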